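(* Let $X=\{X(t)\}_{t\in[0,1]}$ be a centered second-order stochastic process with trajectories in $L^2[0,1]$ which is sample-continuous (all trajectories are continuous functions). Let $\Theta=\bigcup_{p\ge1}\Theta_p$ with $\Theta_p=\mathbb{R}^p\times[0,1]^p\times\mathbb{R}\times\mathbb{R}^+_0$, generic element $\theta=(\beta_1,\dots,\beta_p,t_1,\dots,t_p,\alpha_0,\sigma^2)$, equipped with the metric $d(\theta,\theta')=\min\{\|\theta-\theta'\|,1\}$ if $\theta,\theta'$ lie in the same $\Theta_p$ and $1$ otherwise, and its Borel $\sigma$-algebra. For $\theta\in\Theta_p$ let $P_\theta$ be the distribution on $L^2[0,1]\times\mathbb{R}$ of $(X,Y)$, where $X$ has the law of the process and $Y\mid X\sim\mathcal N(\alpha_0+\sum_{j=1}^p\beta_jX(t_j),\sigma^2)$. Then the map $\theta\mapsto P_\theta(A)$ is measurable for every measurable set $A\subseteq L^2[0,1]\times\mathbb{R}$. *)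

(* Defs.v *)
From HB Require Import structures.
From mathcomp Require Import all_boot all_order all_algebra.
From mathcomp Require Import all_classical all_reals all_analysis.
From mathcomp Require Import measurable_realfun.
Set Implicit Arguments. Unset Strict Implicit. Unset Printing Implicit Defensive.
Import Order.TTheory GRing.Theory Num.Def Num.Theory.
Import numFieldNormedType.Exports.
Local Open Scope classical_set_scope.
Local Open Scope ring_scope.

Definition metric_opens {R : realType} {T : Type} (dist : T -> T -> R)
  : set (set T) :=
  [set U | forall x, U x -> exists2 e : R, 0 < e & forall y, dist x y < e -> U y].

(* The Borel
   sigma-algebra of this pseudo-metric consists exactly of the preimages
   of Borel sets of the quotient L^2[0,1] (functions mod a.e. equality). *)
Record L2 (R : realType) := MkL2 {
  l2f : R -> R ;
  l2_meas : measurable_fun (`[0%R, 1%R] : set R) l2f ;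
  l2_fin : (\int[@lebesgue_measure R]_(x in `[0%R, 1%R]) ((l2f x) ^+ 2)%:E < +oo)%E }.

Section L2_inst.
Variable R : realType.
Lemma L2_zero_meas : measurable_fun (`[0%R, 1%R] : set R) (fun _ : R => 0 : R).
Proof. exact: measurable_cst. Qed.
Lemma L2_zero_fin :
  (\int[@lebesgue_measure R]_(x in `[0%R, 1%R]) (((fun _ : R => 0 : R) x) ^+ 2)%:E < +oo)%E.
Proof.
under eq_integral do rewrite expr0n /=.
by rewrite integral0 ltry.
Qed.
HB.instance Definition _ := gen_eqMixin (L2 R).
HB.instance Definition _ := gen_choiceMixin (L2 R).
HB.instance Definition _ := isPointed.Build (L2 R) (MkL2 L2_zero_meas L2_zero_fin).
End L2_inst.

Definition L2dist {R : realType} (f g : L2 R) : R :=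
  Num.sqrt (fine (\int[@lebesgue_measure R]_(x in `[0%R, 1%R])
                    ((l2f f x - l2f g x) ^+ 2)%:E)).

Definition L2M (R : realType) := g_sigma_algebraType (metric_opens (@L2dist R)).

Definition Theta_wf {R : realType} (b t : seq R) (s2 : R) : bool :=
  [&& (0 < size b)%N, size t == size b, all (fun u => 0 <= u <= 1) t & 0 <= s2].

Record Theta (R : realType) := MkTheta {
  th_beta : seq R ;
  th_t : seq R ;
  th_alpha : R ;
  th_sigma2 : R ;
  th_wf : Theta_wf th_beta th_t th_sigma2 }.

Section Theta_inst.
Variable R : realType.
Lemma Theta_wf0 : Theta_wf [:: 0 : R] [:: 0 : R] 0.
Proof. by rewrite /Theta_wf /= lexx ler01. Qed.
HB.instance Definition _ := gen_eqMixin (Theta R).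
HB.instance Definition _ := gen_choiceMixin (Theta R).
HB.instance Definition _ := isPointed.Build (Theta R) (MkTheta 0 Theta_wf0).
End Theta_inst.

Definition Theta_eucl {R : realType} (th th' : Theta R) : R :=
  Num.sqrt (\sum_(bb <- zip (th_beta th) (th_beta th')) (bb.1 - bb.2) ^+ 2
          + \sum_(tt <- zip (th_t th) (th_t th')) (tt.1 - tt.2) ^+ 2
          + (th_alpha th - th_alpha th') ^+ 2
          + (th_sigma2 th - th_sigma2 th') ^+ 2).

Definition Theta_dist {R : realType} (th th' : Theta R) : R :=
  if size (th_beta th) == size (th_beta th') then Num.min (Theta_eucl th th') 1
  else 1.

Definition ThetaM (R : realType) := g_sigma_algebraType (metric_opens (@Theta_dist R)).

Definition gaussian {R : realType} (m s2 : R) : set R -> \bar R :=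
  if s2 == 0 then \d_m else normal_prob m (Num.sqrt s2).

Definition reg_mean {R : realType} (th : Theta R) (x : R -> R) : R :=
  th_alpha th + \sum_(bt <- zip (th_beta th) (th_t th)) bt.1 * x bt.2.

(* P_theta(A) for A a subset of L^2[0,1] x R: law of (X, Y) with
   X ~ law of the process, Y | X ~ N(reg_mean theta X, sigma^2). *)
Definition P_theta {R : realType} {d} {Omega : measurableType d}
  (P : probability Omega R) (X : Omega -> L2 R) (th : Theta R)
  (A : set (L2M R * R)) : \bar R :=
  (\int[P]_w gaussian (reg_mean th (l2f (X w))) (th_sigma2 th)
               [set y | A (X w, y)])%E.

(* Main.v *)
Set Warnings "-all".
Require Import Defs.
From HB Require Import structures.
From mathcomp Require Import all_boot all_order all_algebra.
From mathcomp Require Import all_classical all_reals all_analysis.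
From mathcomp Require Import measurable_realfun.
From mathcomp.algebra_tactics Require Import lra.
Import Order.TTheory GRing.Theory Num.Def Num.Theory.
Import numFieldTopology.Exports numFieldNormedType.Exports.
Local Open Scope classical_set_scope.
Local Open Scope ring_scope.

Lemma measurable_inv (R : realType) : measurable_fun [set: R] GRing.inv.
Proof.
have -> : [set: R] = [set~ 0] `|` [set 0] by rewrite setUC setUCr.
apply/measurable_funU => //; first exact: measurableC.
split; last exact: measurable_fun_set1.
apply: subspace_continuous_measurable_fun; first exact: measurableC.
rewrite continuous_subspace_in => x /set_mem /= x0.
apply: continuous_subspaceT_for => //; apply: inv_continuous; exact/eqP.
Qed.

Section gaussian_measure.
Variables (R : realType) (m s : R).
Let g0 : gaussian m s set0 = 0%E.
Proof. by rewrite /gaussian; case: ifP => _; exact: measure0. Qed.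
Let gge0 A : (0 <= gaussian m s A)%E.
Proof. by rewrite /gaussian; case: ifP => _; exact: measure_ge0. Qed.
Let gsa : semi_sigma_additive (gaussian m s).
Proof. rewrite /gaussian; case: ifP => _. exact: measure_semi_sigma_additive. exact: (@measure_semi_sigma_additive _ _ _ (normal_prob m (Num.sqrt s))). Qed.
HB.instance Definition _ := isMeasure.Build _ _ _ (gaussian m s) g0 gge0 gsa.
Let gT : gaussian m s [set: R] = 1%E.
Proof. by rewrite /gaussian; case: ifP => _; exact: probability_setT. Qed.
HB.instance Definition _ := @Measure_isProbability.Build _ _ R (gaussian m s) gT.
End gaussian_measure.

Lemma measurable_sqrt (R : realType) : measurable_fun [set: R] Num.sqrt.
Proof. exact: continuous_measurable_fun (@sqrt_continuous R). Qed.

Section comp_helpers.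
Context d (T : measurableType d) (R : realType) (f : T -> R).
Hypothesis mf : measurable_fun setT f.
Lemma mcompV : measurable_fun setT (fun x => (f x)^-1).
Proof. exact: (measurableT_comp (measurable_inv R) mf). Qed.
Lemma mcompS : measurable_fun setT (fun x => Num.sqrt (f x)).
Proof. exact: (measurableT_comp (measurable_sqrt R) mf). Qed.
Lemma mcompE : measurable_fun setT (fun x => expR (f x)).
Proof. exact: (measurableT_comp (@measurable_expR R) mf). Qed.
Lemma mcompN n : measurable_fun setT (fun x => f x *+ n).
Proof. exact: (measurableT_comp (@natmul_measurable R setT n) mf). Qed.
End comp_helpers.

Lemma measurable_pdf (R : realType) :
  measurable_fun [set: (R * R) * R]
    (fun z => normal_pdf z.1.1 (Num.sqrt z.1.2) z.2).
Proof.
rewrite /normal_pdf /=.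
apply: measurable_fun_ifT.
- apply: measurable_fun_eqr => //.
  apply: measurableT_comp; first exact: measurable_sqrt.
  exact: measurableT_comp.
- apply: measurableT_comp => //; exact: measurable_indic.
- apply: measurable_funM.
  + rewrite /normal_peak; apply: mcompV; apply: mcompS; apply: mcompN.
    apply: measurable_funM => //; apply: measurable_funX; apply: mcompS.
    exact: measurableT_comp.
  + rewrite /normal_fun; apply: mcompE.
    apply: measurable_funM.
      apply: measurable_funN; apply: measurable_funX; apply: measurable_funB => //.
      exact: measurableT_comp.
    apply: mcompV; apply: mcompN; apply: measurable_funX; apply: mcompS.
    exact: measurableT_comp.
Qed.

Lemma measurable_gaussian (R : realType) (U : set R) : measurable U ->
  measurable_fun [set: R * R] (fun p => gaussian p.1 p.2 U).
Proof.
move=> mU; rewrite /gaussian.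
rewrite (_ : (fun p => _) = fun p : R * R => if p.2 == 0 then \d_(p.1) U
   else normal_prob p.1 (Num.sqrt p.2) U); last first.
  by apply/funext => p; case: ifP.
apply: measurable_fun_ifT.
- by apply: measurable_fun_eqr.
- under eq_fun do rewrite diracE.
  apply/measurable_EFinP.
  have := measurableT_comp (measurable_indic (R:=R) (D:=setT) mU) (@measurable_fst _ _ R R).
  by apply: eq_measurable_fun => x _; rewrite /= indicE.
- rewrite /normal_prob.
  under eq_fun do rewrite integral_mkcond.
  pose f := (fun z : (R * R) * R => ((normal_pdf z.1.1 (Num.sqrt z.1.2) z.2) * \1_U z.2)%:E).
  have -> : (fun x : R * R => (\int[lebesgue_measure]_x0 ((fun x1 => (normal_pdf x.1 (Num.sqrt x.2) x1)%:E) \_ U) x0)%E) = fubini_F lebesgue_measure f.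
    apply/funext => x; rewrite /fubini_F; apply: eq_integral => y _.
    by rewrite /f /patch indicE; case: (y \in U); rewrite ?mulr1 ?mulr0.
  apply: measurable_fun_fubini_tonelli_F.
    apply/measurable_EFinP; apply: measurable_funM; first exact: measurable_pdf.
    exact: measurableT_comp.
  by move=> z; rewrite /f lee_fin mulr_ge0 ?normal_pdf_ge0.
Qed.

Section gker.
Context d (T : measurableType d) (R : realType).
Definition gker (z : T * (R * R)) : {measure set R -> \bar R} := gaussian z.2.1 z.2.2.
Lemma gker_meas U : measurable U -> measurable_fun [set: T * (R * R)] (gker ^~ U).
Proof.
move=> mU; have := measurableT_comp (@measurable_gaussian R U mU) (@measurable_snd _ _ T (R * R)%type).
by apply: eq_measurable_fun.
Qed.
HB.instance Definition _ := isKernel.Build _ _ _ _ _ gker gker_meas.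
Lemma gker_uub : measure_fam_uub gker.
Proof.
exists 2%R => z; rewrite /gker /=.
by rewrite (@probability_setT _ _ _ (gaussian z.2.1 z.2.2)) lte_fin ltr1n.
Qed.
HB.instance Definition _ := Kernel_isFinite.Build _ _ _ _ _ gker gker_uub.

Lemma gker_sec (A : set (T * (R * R) * R)) : measurable A ->
  measurable_fun setT (fun z => gker z (xsection A z)).
Proof. move=> mA; apply: measurable_fun_xsection_finite_kernel; exact/mem_set. Qed.
End gker.

Section theta.
Variable R : realType.

Lemma zip_sq_le (s s' : seq R) j : size s = size s' ->
  (nth 0 s j - nth 0 s' j) ^+ 2 <= \sum_(bb <- zip s s') (bb.1 - bb.2) ^+ 2.
Proof.
elim: s s' j => [|a s IH] [|b s'] //= j.
  by move=> _; rewrite nth_nil subr0 expr0n big_nil.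
case=> hs; rewrite big_cons; case: j => [|j] /=.
  by rewrite lerDl sumr_ge0 // => i _; exact: sqr_ge0.
by rewrite (le_trans (IH _ _ hs)) // lerDr sqr_ge0.
Qed.

Lemma sum_sq_ge0 (s : seq (R * R)) : 0 <= \sum_(bb <- s) (bb.1 - bb.2) ^+ 2.
Proof. by rewrite sumr_ge0 // => i _; exact: sqr_ge0. Qed.

Lemma Theta_dist_lt1 (th th' : Theta R) : Theta_dist th th' < 1 ->
  size (th_beta th) = size (th_beta th') /\
  size (th_t th) = size (th_t th') /\ Theta_dist th th' = Theta_eucl th th'.
Proof.
rewrite /Theta_dist; case: eqP => [hs h|]; last by rewrite ltxx.
have /and4P[_ /eqP tb _ _] := th_wf th.
have /and4P[_ /eqP tb' _ _] := th_wf th'.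
rewrite tb tb'; split => //; split => //.
apply: min_l; move: h; by rewrite gt_min ltxx orbF => /ltW.
Qed.

Lemma Theta_size_t (th : Theta R) : size (th_t th) = size (th_beta th).
Proof. by have /and4P[_ /eqP -> _ _] := th_wf th. Qed.

Lemma Theta_meas (f : Theta R -> R) :
  (forall th th', Theta_dist th th' < 1 -> `|f th - f th'| <= Theta_dist th th') ->
  measurable_fun [set: ThetaM R] (f : ThetaM R -> R).
Proof.
move=> fL.
apply: (measurability (@RGenOInfty.G R)) => [|/= _ [_] [x] -> <-].
  exact: RGenOInfty.measurableE.
apply: sub_sigma_algebra; rewrite setTI => th /= hx.
have e0 : 0 < minr (f th - x) 1.
  by rewrite lt_min ltr01 andbT subr_gt0; move: hx; rewrite in_itv /= andbT.
exists (minr (f th - x) 1) => // th' hd.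
have hd1 : Theta_dist th th' < 1 by move: hd; rewrite lt_min => /andP[].
have h2 : `|f th - f th'| < f th - x.
  by rewrite (le_lt_trans (fL _ _ hd1)) // (lt_le_trans hd) // ge_min lexx.
rewrite in_itv /= andbT.
have := le_lt_trans (ler_norm _) h2; lra.
Qed.

Lemma abs_le_sqrt (x a : R) : x ^+ 2 <= a -> `|x| <= Num.sqrt a.
Proof. by move=> h; rewrite -sqrtr_sqr ler_wsqrtr. Qed.

Lemma Theta_eucl_ge (th th' : Theta R) j :
  size (th_beta th) = size (th_beta th') -> size (th_t th) = size (th_t th') ->
  [/\ `|nth 0 (th_beta th) j - nth 0 (th_beta th') j| <= Theta_eucl th th',
      `|nth 0 (th_t th) j - nth 0 (th_t th') j| <= Theta_eucl th th',
      `|th_alpha th - th_alpha th'| <= Theta_eucl th th' &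
      `|th_sigma2 th - th_sigma2 th'| <= Theta_eucl th th'].
Proof.
move=> hb ht; rewrite /Theta_eucl.
have h1 := zip_sq_le _ _ j hb; have h2 := zip_sq_le _ _ j ht.
have g1 := sum_sq_ge0 (zip (th_beta th) (th_beta th')).
have g2 := sum_sq_ge0 (zip (th_t th) (th_t th')).
have g3 := sqr_ge0 (th_alpha th - th_alpha th').
have g4 := sqr_ge0 (th_sigma2 th - th_sigma2 th').
split; apply: abs_le_sqrt; lra.
Qed.

Lemma meas_beta j : measurable_fun [set: ThetaM R] (fun th : ThetaM R => nth 0 (th_beta th) j).
Proof.
apply: Theta_meas => th th' /Theta_dist_lt1 [hb [ht ->]].
by have [] := Theta_eucl_ge _ _ j hb ht.
Qed.
Lemma meas_t j : measurable_fun [set: ThetaM R] (fun th : ThetaM R => nth 0 (th_t th) j).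
Proof.
apply: Theta_meas => th th' /Theta_dist_lt1 [hb [ht ->]].
by have [] := Theta_eucl_ge _ _ j hb ht.
Qed.
Lemma meas_alpha : measurable_fun [set: ThetaM R] (fun th : ThetaM R => th_alpha th).
Proof.
apply: Theta_meas => th th' /Theta_dist_lt1 [hb [ht ->]].
by have [] := Theta_eucl_ge _ _ 0 hb ht.
Qed.
Lemma meas_sigma2 : measurable_fun [set: ThetaM R] (fun th : ThetaM R => th_sigma2 th).
Proof.
apply: Theta_meas => th th' /Theta_dist_lt1 [hb [ht ->]].
by have [] := Theta_eucl_ge _ _ 0 hb ht.
Qed.
End theta.

Section approx.
Variable R : realType.

Definition rN (n : nat) (t : R) : R := (trunc (n.+1%:R * t))%:R / n.+1%:R.

Lemma rN_prop n (t : R) : 0 <= t <= 1 ->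
  [/\ 0 <= rN n t, rN n t <= t & t - (n.+1%:R)^-1 <= rN n t].
Proof.
move=> /andP[t0 t1].
have N0 : 0 < n.+1%:R :> R by rewrite ltr0n.
have /andP[h1 h2] := truncn_itv (mulr_ge0 (ler0n _ n.+1) t0).
rewrite /rN; split.
- by rewrite divr_ge0.
- by rewrite ler_pdivrMr // [t * _]mulrC.
- have h3 : n.+1%:R * t < (trunc (n.+1%:R * t))%:R + 1 by rewrite natr1.
  rewrite -(ler_pM2r N0) mulrBl mulVf ?gt_eqF // divfK ?gt_eqF //.
  lra.
Qed.

Lemma collapse (z : R) (N : nat) (f : nat -> R) : 0 <= z < N.+1%:R ->
  \sum_(k < N.+1) \1_(`[k%:R, k.+1%:R[ : set R) z * f k = f (trunc z).
Proof.
move=> /andP[z0 zN].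
have /andP[h1 h2] := truncn_itv z0.
have tN : (trunc z < N.+1)%N.
  by rewrite -(ltr_nat R); apply: le_lt_trans zN.
rewrite (bigD1 (Ordinal tN)) //= big1 ?addr0.
  by rewrite indicE mem_set ?mul1r //= in_itv /= h1 h2.
move=> k /eqP hk; rewrite indicE memNset ?mul0r // => /=.
rewrite in_itv /= => /andP[k1 k2]; apply: hk; apply: val_inj => /=.
by apply/esym/truncn_def; rewrite k1 k2.
Qed.
End approx.
Arguments rN {R}. Arguments rN_prop {R}. Arguments collapse {R}.

Lemma nth_t01 {R : realType} (th : Theta R) j : 0 <= nth 0 (th_t th) j <= 1.
Proof.
have /and4P[_ _ /allP ht _] := th_wf th.
have [jl|jl] := ltnP j (size (th_t th)).
  exact: ht (mem_nth 0 jl).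
by rewrite nth_default // lexx ler01.
Qed.

Lemma big_zip_nth {R : realType} (b t : seq R) (F : R -> R -> R) : size b = size t ->
  \sum_(bt <- zip b t) F bt.1 bt.2 = \sum_(j < size b) F (nth 0 b j) (nth 0 t j).
Proof.
elim: b t => [|a b IH] [|c t] //=; first by rewrite big_nil big_ord0.
by case=> h; rewrite big_cons big_ord_recl /= IH.
Qed.

Section joint.
Variables (R : realType) (d : measure_display) (Omega : measurableType d).
Variable x : Omega -> R -> R.
Hypothesis hXt : forall t, t \in `[0, 1] -> measurable_fun setT (fun w => x w t).
Hypothesis hcont : forall w, {within `[0, 1], continuous (x w)}.

Definition gapp n (z : ThetaM R * Omega) : R :=
  th_alpha z.1 + \sum_(j < n) (nth 0 (th_beta z.1) j *
    \sum_(k < n.+2) \1_(`[k%:R, k.+1%:R[ : set R) (n.+1%:R * nth 0 (th_t z.1) j)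
       * x z.2 (k%:R / n.+1%:R)).

Lemma gapp_meas n : measurable_fun setT (gapp n).
Proof.
apply: measurable_funD; first exact: measurableT_comp (@meas_alpha R) measurable_fst.
apply: measurable_sum => j; apply: measurable_funM.
  exact: measurableT_comp (@meas_beta R j) measurable_fst.
apply: measurable_sum => k; apply: measurable_funM.
  apply: measurableT_comp; first exact: measurable_indic.
  apply: measurable_funM => //.
  exact: measurableT_comp (@meas_t R j) measurable_fst.
have hk : (k%:R / n.+1%:R : R) \in `[0, 1].
  rewrite in_itv /= divr_ge0 //= ler_pdivrMr ?ltr0n // mul1r ler_nat.
  exact: ltn_ord k.
have := measurableT_comp (hXt _ hk) (@measurable_snd _ _ (ThetaM R) Omega).
by apply: eq_measurable_fun.
Qed.


Lemma rN_cvg (t : R) : 0 <= t <= 1 -> rN n t @[n --> \oo] --> t.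
Proof.
move=> t01.
apply: (@squeeze_cvgr _ _ _ _ (fun n => t - harmonic n) (fun=> t)).
- by near=> n; have [_ h1 h2] := rN_prop n t t01; rewrite h2 h1.
- rewrite -[X in _ --> X]subr0; apply: cvgB; first exact: cvg_cst.
  exact: cvg_harmonic.
- exact: cvg_cst.
Unshelve. all: end_near.
Qed.

Lemma rN_cvg_x w (t : R) : 0 <= t <= 1 -> x w (rN n t) @[n --> \oo] --> x w t.
Proof.
move=> t01.
have tA : `[0, 1]%classic t by rewrite /= in_itv.
apply: (@cvg_comp _ _ _ (rN ^~ t) (x w) _ (within `[0, 1] (nbhs t))).
- move=> P /= hP.
  have h : \forall n \near \oo, (`[0, 1]%classic (rN n t) -> P (rN n t)) := rN_cvg t t01 _ hP.
  apply: filterS h => n /= h.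
  apply: h; have [h0 h1 _] := rN_prop n t t01; rewrite /= in_itv /= h0 /=.
  by case/andP: t01 => _; exact: le_trans.
- by move=> h; rewrite nbhs_subspace_in //; exact: (hcont w t).
Qed.

Lemma sum_trunc (F : nat -> R) p n : (p <= n)%N -> (forall j, (p <= j)%N -> F j = 0) ->
  \sum_(j < n) F j = \sum_(j < p) F j.
Proof.
move=> pn hF; rewrite -!(big_mkord xpredT) (big_cat_nat (n := p)) //=.
rewrite [X in _ + X]big1_seq ?addr0 // => j /andP[_].
by rewrite mem_index_iota => /andP[pj _]; exact: hF.
Qed.

Lemma gapp_cvg z : gapp n z @[n --> \oo] --> reg_mean z.1 (x z.2).
Proof.
case: z => th w /=.
set p := size (th_beta th).
have e1 n : gapp n (th, w) = th_alpha th +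
    \sum_(j < n) nth 0 (th_beta th) j * x w (rN n (nth 0 (th_t th) j)).
  rewrite /gapp /=; congr (_ + _); apply: eq_bigr => j _; congr (_ * _).
  have /andP[t0 t1] := nth_t01 (th : Theta R) j.
  rewrite (collapse _ n.+1 (fun k => x w (k%:R / n.+1%:R))) //.
  rewrite mulr_ge0 //= (@le_lt_trans _ _ n.+1%:R) //; last by rewrite ltr_nat.
  by rewrite ler_piMr.
have e2 : \forall n \near \oo, gapp n (th, w) = th_alpha th +
    \sum_(j < p) nth 0 (th_beta th) j * x w (rN n (nth 0 (th_t th) j)).
  near=> n; rewrite e1; congr (_ + _); apply: (sum_trunc (fun j => nth 0 (th_beta th) j * x w (rN n (nth 0 (th_t th) j)))).
    near: n; exists p => //.
  by move=> j pj; rewrite nth_default // mul0r.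
have e3 : \forall n \near \oo, th_alpha th +
    \sum_(j < p) nth 0 (th_beta th) j * x w (rN n (nth 0 (th_t th) j)) = gapp n (th, w).
  by apply: filterS e2 => n ->.
apply: cvg_trans (near_eq_cvg e3) _.
rewrite /reg_mean (big_zip_nth _ _ (fun a b => a * x w b)); last by rewrite Theta_size_t.
apply: cvgD; first exact: cvg_cst.
rewrite -/p; clear e1 e2 e3; clearbody p; elim: p => [|p IH].
  by under eq_fun do rewrite big_ord0; rewrite big_ord0; exact: cvg_cst.
under eq_fun do rewrite big_ord_recr /=.
rewrite big_ord_recr /=; apply: cvgD; first exact: IH.
apply: cvgM; first exact: cvg_cst.
exact/rN_cvg_x/nth_t01.
Unshelve. all: end_near.
Qed.
End joint.

Lemma regmean_meas (R : realType) (d : measure_display) (Omega : measurableType d)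
  (x : Omega -> R -> R)
  (hXt : forall t, t \in `[0, 1] -> measurable_fun setT (fun w => x w t))
  (hcont : forall w, {within `[0, 1], continuous (x w)}) :
  measurable_fun setT (fun z : ThetaM R * Omega => reg_mean z.1 (x z.2)).
Proof.
apply: (measurable_fun_cvg (h := @gapp R d Omega x)) => [n|z _].
  exact: (@gapp_meas R d Omega x hXt n).
exact: (@gapp_cvg R d Omega x hcont z).
Qed.

Theorem proposition3 (R : realType) (d : measure_display) (Omega : measurableType d)
  (P : probability Omega R) (X : Omega -> L2 R)
  (* X is a random element of L^2[0,1] *)
  (hXmeas : measurable_fun setT (X : Omega -> L2M R))
  (* each X(t) is a random variable *)
  (hXt : forall t, t \in `[0, 1] -> measurable_fun setT (fun w => l2f (X w) t))
  (* second order *)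
  (h2 : forall t, t \in `[0, 1] ->
          P.-integrable setT (fun w => ((l2f (X w) t) ^+ 2)%:E))
  (* centered *)
  (hc : forall t, t \in `[0, 1] -> ('E_P[fun w => l2f (X w) t] = 0)%E)
  (* sample-continuous *)
  (hcont : forall w, {within `[0, 1], continuous (l2f (X w))}) :
  forall A : set (L2M R * R), measurable A ->
    measurable_fun [set: ThetaM R] (fun th : ThetaM R => P_theta P X th A : \bar R).
Proof.
move=> A mA.
have hrm := @regmean_meas R d Omega (fun w => l2f (X w)) hXt hcont.
pose U : set ((L2M R * (R * R)) * R) := [set z | A (z.1.1, z.2)].
have mU : measurable U.
  have mp : measurable_fun setT (fun z : (L2M R * (R * R)) * R => (z.1.1, z.2)).
    apply: measurable_fun_pair => //.
    exact: measurableT_comp.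
  by have := mp measurableT _ mA; rewrite setTI.
pose G : ThetaM R * Omega -> L2M R * (R * R) :=
  fun z => (X z.2, (reg_mean z.1 (l2f (X z.2)), th_sigma2 z.1)).
have mG : measurable_fun setT G.
  apply: measurable_fun_pair; first exact: measurableT_comp.
  apply: measurable_fun_pair; first exact: hrm.
  exact: measurableT_comp (@meas_sigma2 R) measurable_fst.
pose f z := @gker _ (L2M R) R (G z) (xsection U (G z)).
have mf : measurable_fun setT f.
  exact: measurableT_comp (@gker_sec _ (L2M R) R U mU) mG.
rewrite (_ : (fun th => _) = fubini_F P f).
  apply: measurable_fun_fubini_tonelli_F; first exact: mf.
  move=> z; exact: (@measure_ge0 _ _ _ (@gker _ (L2M R) R (G z))).
apply/funext => th; rewrite /fubini_F /P_theta; apply: eq_integral => w _.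
rewrite /f /gker /G /=; congr (gaussian _ _ _).
by apply/funext => y; rewrite /xsection /U /= in_setE.
Qed.
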